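(* For any optimal solution $\mathbf p$ (pure strategy profile maximizing $TR$), $TR(\mathbf p)\le \mu m\left(1-\frac{\mu}{n_1\phi+\mu}\right)$.
   Context: Network model: there are $m\ge 2$ source nodes $s_1,\dots,s_m$ and one destination $d$. Source $s_i$ has a set $N_i$ of $n_i$ users, with $n_1>n_2>\dots>n_m$. Each user generates an independent Poisson flow of packets of rate $\phi>0$; each direct link $(s_i,d)$ has service rate $\mu>0$; each sidelink loses packets independently with probability $q\in[0,1]$, and $\bar q=1-q$. A pure strategy of a user in $N_i$ is either the direct path (DP) $(s_i,d)$ or an indirect path (IP) $(s_i,s_j,d)$, $j\neq i$. For a pure profile, $u_i$ is the number of users of $N_i$ choosing DP and $v_i$ the number of users of other sources choosing an IP $(s_j,s_i,d)$. With $T_i=u_i\phi+v_i\bar q\phi$, the total traffic rate is $TR=\sum_i\frac{\mu T_i}{T_i+\mu}$. *)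

(* Defs.v *)
From HB Require Import structures.
From mathcomp Require Import all_boot all_order all_algebra.
Set Implicit Arguments. Unset Strict Implicit. Unset Printing Implicit Defensive.
Import Order.TTheory GRing.Theory Num.Theory.
Local Open Scope ring_scope.

(* Sources s_1..s_m are indexed by 'I_m (0-based: source s_{i+1} is index i).
   n : nat -> nat gives the number of users n_i of each source (only values
   below m matter).  A pure strategy of a user of source i is an element
   j : 'I_m: j = i encodes the direct path (s_i,d), j <> i encodes the
   indirect path (s_i,s_j,d). *)
Definition profile (m : nat) (n : nat -> nat) := forall i : 'I_m, 'I_(n i) -> 'I_m.

Definition u_cnt (m : nat) (n : nat -> nat) (p : profile m n) (i : 'I_m) : nat :=
  #|[set k : 'I_(n i) | p i k == i]|.

Definition v_cnt (m : nat) (n : nat -> nat) (p : profile m n) (i : 'I_m) : nat :=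
  (\sum_(j : 'I_m | j != i) #|[set k : 'I_(n j) | p j k == i]|)%N.

Definition Tload (R : realFieldType) (m : nat) (n : nat -> nat)
  (phi q : R) (p : profile m n) (i : 'I_m) : R :=
  (u_cnt p i)%:R * phi + (v_cnt p i)%:R * (1 - q) * phi.

Definition TR (R : realFieldType) (m : nat) (n : nat -> nat)
  (phi mu q : R) (p : profile m n) : R :=
  \sum_(i : 'I_m) mu * Tload phi q p i / (Tload phi q p i + mu).

Definition optimal (R : realFieldType) (m : nat) (n : nat -> nat)
  (phi mu q : R) (p : profile m n) : Prop :=
  forall p' : profile m n, TR phi mu q p' <= TR phi mu q p.

(* Main.v *)
Require Import Defs.
From HB Require Import structures.
From mathcomp Require Import all_boot all_order all_algebra.
From mathcomp Require Import ring lra.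
Import Order.TTheory GRing.Theory Num.Theory.
Local Open Scope ring_scope.

Lemma tangent (R : realFieldType) (mu c T : R) :
  0 < mu -> 0 <= c -> 0 <= T ->
  mu * T / (T + mu) <= mu * (1 - mu / (c + mu)) + mu ^+ 2 / (c + mu) ^+ 2 * (T - c).
Proof.
move=> hmu hc hT.
have h1 : T + mu != 0 by rewrite gt_eqF //; lra.
have h2 : c + mu != 0 by rewrite gt_eqF //; lra.
rewrite -subr_ge0.
have -> : mu * (1 - mu / (c + mu)) + mu ^+ 2 / (c + mu) ^+ 2 * (T - c) - mu * T / (T + mu)
   = mu ^+ 2 * (T - c) ^+ 2 / ((T + mu) * (c + mu) ^+ 2).
  by field; rewrite ?mulf_neq0 ?expf_neq0 ?h1 ?h2.
apply: divr_ge0; first by rewrite mulr_ge0 ?sqr_ge0.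
by rewrite mulr_ge0 ?sqr_ge0 //; lra.
Qed.

Lemma count_sum (m : nat) (n : nat -> nat) (p : profile m n) :
  (\sum_(i : 'I_m) (u_cnt p i + v_cnt p i) = \sum_(j : 'I_m) n j)%N.
Proof.
have E : forall i : 'I_m, (u_cnt p i + v_cnt p i =
   \sum_(j : 'I_m) #|[set k : 'I_(n j) | p j k == i]|)%N.
  by move=> i; rewrite [in RHS](bigD1 i) //.
rewrite (eq_bigr _ (fun i _ => E i)) exchange_big /=.
apply: eq_bigr => j _.
rewrite -[in RHS](card_ord (n j)) -sum1_card.
rewrite (partition_big (p j) xpredT) //=.
apply: eq_bigr => i _.
by rewrite -sum1_card; apply: eq_bigl => k; rewrite inE.
Qed.

Theorem lemma3 (R : realFieldType) (m : nat) (n : nat -> nat) (phi mu q : R)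
  (hm : (2 <= m)%N)
  (hn : forall i j : nat, (i < j)%N -> (j < m)%N -> (n j < n i)%N)
  (hphi : 0 < phi) (hmu : 0 < mu) (hq0 : 0 <= q) (hq1 : q <= 1)
  (p : profile m n) (hopt : optimal phi mu q p) :
  TR phi mu q p <= mu * m%:R * (1 - mu / ((n 0%N)%:R * phi + mu)).
Proof.
set c := (n 0%N)%:R * phi.
have hc : 0 <= c by rewrite mulr_ge0 // ltW.
have hT : forall i, 0 <= Tload phi q p i.
  move=> i; rewrite /Tload; apply: addr_ge0; first by rewrite mulr_ge0 ?ler0n ?ltW.
  apply: mulr_ge0; last exact: ltW.
  by apply: mulr_ge0; rewrite ?ler0n // subr_ge0.
set K := mu ^+ 2 / (c + mu) ^+ 2.
set A := mu * (1 - mu / (c + mu)).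
have hK : 0 <= K by rewrite divr_ge0 ?sqr_ge0.
have step1 : TR phi mu q p <= \sum_(i : 'I_m) (A + K * (Tload phi q p i - c)).
  by apply: ler_sum => i _; apply: tangent.
apply: (le_trans step1).
rewrite big_split /= sumr_const card_ord -mulr_sumr.
have -> : mu * m%:R * (1 - mu / (c + mu)) = A *+ m by rewrite /A -mulr_natr; ring.
rewrite gerDl.
rewrite pmulr_rle0; last first.
  by rewrite /K divr_gt0 // exprn_gt0 //; lra.
rewrite sumrB sumr_const card_ord subr_le0.
have hsum : \sum_(i : 'I_m) Tload phi q p i <= (\sum_(j : 'I_m) n j)%:R * phi.
  rewrite -(@count_sum m n p) natr_sum mulr_suml; apply: ler_sum => i _.
  rewrite /Tload natrD mulrDl lerD2l.
  rewrite ler_pM2r //.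
  rewrite -[X in _ <= X]mulr1 ler_wpM2l ?ler0n //; lra.
apply: (le_trans hsum).
rewrite /c.
have -> : (n 0%N)%:R * phi *+ m = (n 0%N * m)%:R * phi by rewrite natrM -mulr_natr; ring.
rewrite ler_pM2r // ler_nat.
rewrite mulnC -[X in (X * _)%N]card_ord -sum_nat_const.
apply: leq_sum => j _.
case: (posnP j) => [-> // | hj].
by apply: ltnW; apply: hn.
Qed.
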